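(* Let $k$ be a positive integer and let $p$ be the smallest positive integer such that $k<\kappa_p$ (in dimension $2$). Assume $p$ is a multiple of $4$. If $k-\kappa_{p-1}$ is not an odd multiple of $p/2$, then there exists a subset $\mathcal{X}$ of $\mathbb{P}^2_\circ$ with $\kappa(\mathcal{X})\le k$ and $|\mathcal{X}|=\lfloor\lambda(2,k)\rfloor$. Otherwise, there exists a subset $\mathcal{X}$ of $\mathbb{P}^2_\circ$ with $\kappa(\mathcal{X})\le k$ and $|\mathcal{X}|=\lfloor\lambda(2,k)\rfloor-1$.
   Context: A point of $\mathbb{Z}^2$ is primitive if its coordinates are relatively prime; $\mathbb{P}^2_\circ$ denotes the set of primitive points of $\mathbb{Z}^2$ whose first non-zero coordinate is positive. For a finite $\mathcal{X}\subset\mathbb{R}^2$, $\kappa(\mathcal{X})=\max_{i\in\{1,2\}}\sum_{x\in\mathcal{X}}|x_i|$. $B(2,p)=\{x\in\mathbb{R}^2:\|x\|_1\le p\}$; $N_p=|B(2,p)\cap\mathbb{P}^2_\circ|$ and $\kappa_p=\kappa(B(2,p)\cap\mathbb{P}^2_\circ)$ (with $N_0=\kappa_0=0$). With $p$ as in the claim, $\lambda(2,k)=N_{p-1}+\frac{2(k-\kappa_{p-1})}{p}$. *)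

(* Defs.v *)
From mathcomp Require Import all_boot all_order all_algebra.
Set Implicit Arguments. Unset Strict Implicit. Unset Printing Implicit Defensive.
Import Order.TTheory GRing.Theory Num.Theory.

Definition pt := (int * int)%type.

(* x is in P^2_o: coprime coordinates, first non-zero coordinate positive *)
Definition primb (x : pt) : bool :=
  (gcdz x.1 x.2 == 1%N) && ((0 < x.1)%R || ((x.1 == 0) && (0 < x.2)%R)).

(* kappa of a finite set (given as a duplicate-free list) *)
Definition kappa (X : seq pt) : nat :=
  maxn (\sum_(x <- X) `|x.1|%N) (\sum_(x <- X) `|x.2|%N).

Definition rng (p : nat) : seq int := [seq (i%:Z - p%:Z)%R | i <- iota 0 (2 * p).+1].

Definition ballP (p : nat) : seq pt :=
  [seq x <- [seq (a, b) | a <- rng p, b <- rng p]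
     | primb x && (`|x.1|%N + `|x.2|%N <= p)].

Definition Np (p : nat) : nat := size (ballP p).
Definition kappap (p : nat) : nat := kappa (ballP p).

Definition lambda2 (p k : nat) : rat :=
  ((Np p.-1)%:R + 2%:R * ((k%:Z - (kappap p.-1)%:Z)%:~R) / p%:R)%R.

(* Main.v *)
Require Import Defs.
From mathcomp Require Import all_boot all_order all_algebra.
From mathcomp Require Import zify.
Import Order.TTheory GRing.Theory Num.Theory.


Definition gp (p : nat) (ai : nat * nat) : pt :=
  let (a, i) := ai in
  match i with
  | 0 => (Posz a, Posz (p - a))
  | 1 => (Posz (p - a), Posz a)
  | 2 => (Posz a, (- Posz (p - a))%R)
  | _ => (Posz (p - a), (- Posz a)%R)
  end.

Definition idx (U : seq nat) := [seq (a, i) | a <- U, i <- iota 0 4].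
Definition sh p U := map (gp p) (idx U).

Fixpoint bal (p : nat) (s : seq pt) : bool :=
  match s with
  | x :: y :: s' => [&& (`|x.1|%N + `|y.1|%N == p)%N, (`|x.2|%N + `|y.2|%N == p)%N & bal p s']
  | [::] => true
  | _ => false
  end.

Lemma bal_take p s m : bal p s ->
  (\sum_(x <- take (2 * m) s) `|x.1|%N <= m * p)%N /\
  (\sum_(x <- take (2 * m) s) `|x.2|%N <= m * p)%N.
Proof.
elim: m s => [|m IH] s.
  by rewrite muln0; case: s => [|? ?] _; rewrite /= !big_nil.
case: s => [|x s]; first by move=> _; rewrite /= !big_nil.
case: s => [|y s] //.
have -> : take (2 * m.+1) [:: x, y & s] = [:: x, y & take (2 * m) s] by rewrite mulnS.
move=> /= /and3P [/eqP H1 /eqP H2 /IH [I1 I2]].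
rewrite !big_cons !addnA H1 H2 mulSn.
by split; rewrite leq_add2l.
Qed.

Lemma bal_cat p s t : bal p s -> bal p t -> bal p (s ++ t).
Proof.
move: {2}(size s) (leqnn (size s)) => n; elim: n s => [|n IH] [|x [|y s]] //= Hn.
move=> /and3P [-> -> Hs] Ht /=; apply: IH => //.
by apply: leq_trans (leqnSn _) _.
Qed.

Lemma bal_sh p U : all (fun a => a <= p)%N U -> bal p (sh p U).
Proof.
elim: U => [|a U IH] //= /andP [Ha HU].
rewrite /sh /idx /= -/(idx U) -/(sh p U) /=.
rewrite !abszN !absz_nat subnK // addnC subnK // eqxx /=.
exact: IH.
Qed.

Lemma mem_rng q z : (z \in rng q) = (`|z| <= q)%N.
Proof.
apply/mapP/idP => [[i]|Hz].
  rewrite mem_iota add0n => Hi ->. lia.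
exists `|(z + q%:Z)%R|%N; first by rewrite mem_iota; lia.
lia.
Qed.

Lemma mem_ballP q x : (x \in ballP q) = primb x && (`|x.1| + `|x.2| <= q)%N.
Proof.
rewrite /ballP mem_filter; apply/andP/idP => [[H1 H2] //|H]; split => //.
move/andP: H => [_ H].
apply/allpairsP; exists x; rewrite !mem_rng; split => //; [lia|lia|by case: x {H}].
Qed.

Lemma uniq_ballP q : uniq (ballP q).
Proof.
rewrite /ballP filter_uniq // allpairs_uniq //.
- rewrite map_inj_uniq ?iota_uniq // => i j /= H; lia.
- rewrite map_inj_uniq ?iota_uniq // => i j /= H; lia.
by move=> [a b] [c d] _ _ /=.
Qed.

Lemma gp_inj p a b i j : (0 < a)%N -> (2 * a < p)%N -> (0 < b)%N -> (2 * b < p)%N ->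
  (i < 4)%N -> (j < 4)%N -> gp p (a, i) = gp p (b, j) -> (a, i) = (b, j).
Proof.
move=> ha hpa hb hpb.
case: i => [|[|[|[|i]]]] // _; case: j => [|[|[|[|j]]]] // _ /= [] H1 H2; congr pair; lia.
Qed.

Lemma gcd_sub a p : (a <= p)%N -> gcdn a (p - a) = gcdn a p.
Proof. by move=> h; rewrite -{2}(subnKC h) gcdnDl. Qed.

Lemma primb_gp p a i : (0 < a)%N -> (a < p)%N -> coprime a p -> primb (gp p (a, i)).
Proof.
move=> ha hap hc.
have h1 : gcdn a (p - a) = 1%N by rewrite gcd_sub ?(ltnW hap) //; apply/eqP.
have h2 : gcdn (p - a) a = 1%N by rewrite gcdnC.
rewrite /primb.
case: i => [|[|[|i]]] /=; rewrite /gcdz ?abszN ?absz_nat ?h1 ?h2 eqxx /=;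
  rewrite ?ltz_nat ?ha ?subn_gt0 ?hap //.
Qed.

Lemma norm_gp p a i : (a <= p)%N -> (`|(gp p (a, i)).1| + `|(gp p (a, i)).2| = p)%N.
Proof.
move=> h; case: i => [|[|[|i]]] /=; rewrite ?abszN ?absz_nat; lia.
Qed.

Definition Uof p := [seq a <- iota 1 (p %/ 2).-1 | coprime a p].

Lemma mem_Uof p a : (a \in Uof p) = [&& (0 < a)%N, (a < p %/ 2)%N & coprime a p].
Proof.
rewrite /Uof mem_filter mem_iota andbC; case: coprime => //=; rewrite ?andbF //.
apply/idP/idP => /andP [h1 h2]; apply/andP; split; lia.
Qed.

Lemma mem_sh p U a i : a \in U -> (i < 4)%N -> gp p (a, i) \in sh p U.
Proof.
move=> ha hi; apply: map_f; apply: allpairs_f => //; rewrite mem_iota; lia.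
Qed.

Lemma shell_mem p x : (4 <= p)%N -> ~~ odd p -> primb x ->
  (`|x.1| + `|x.2| = p)%N -> x \in sh p (Uof p).
Proof.
case: x => a b hp ev /andP [/eqP hg hs] /= hn.
have hg' : gcdn `|a| `|b| = 1%N by move: hg; rewrite /gcdz => -[].
have apos : (0 < a)%R.
  case/orP: hs => // /andP [/= a0 _]; move: hg'; rewrite (eqP a0) gcd0n => hb; lia.
set n := `|a|%N in hn hg'.
have ea : a = Posz n by rewrite /n gtz0_abs.
have hnp : (n < p)%N.
  rewrite ltn_neqAle -hn leq_addr andbT; apply/negP => /eqP hnp.
  have b0 : `|b|%N = 0%N by lia.
  move: hg'; rewrite b0 gcdn0 => n1; lia.
have hb : `|b|%N = (p - n)%N by lia.
have cnp : coprime n p by rewrite /coprime -gcd_sub ?(ltnW hnp) // -hb hg'.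
have [lt2|ge2] := ltnP (2 * n) p.
  have nU : n \in Uof p by rewrite mem_Uof cnp andbT; apply/andP; split; lia.
  have [b0|b0] := lerP 0 b.
    have -> : (a, b) = gp p (n, 0%N) by rewrite /= ea; congr pair; lia.
    exact: mem_sh.
  have -> : (a, b) = gp p (n, 2%N) by rewrite /= ea; congr pair; lia.
  exact: mem_sh.
have n2 : (p < 2 * n)%N.
  rewrite ltn_neqAle ge2 andbT; apply/negP => /eqP e.
  have e2 : (p - n = n)%N by lia.
  move: cnp; rewrite /coprime -gcd_sub ?(ltnW hnp) // e2 gcdnn => /eqP n1; lia.
set m := (p - n)%N.
have cmp : coprime m p.
  by rewrite /coprime -gcd_sub /m ?leq_subr // subKn ?(ltnW hnp) // gcdnC -hb hg'.
have mU : m \in Uof p by rewrite mem_Uof cmp andbT; apply/andP; split; lia.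
have [b0|b0] := lerP 0 b.
  have -> : (a, b) = gp p (m, 1%N) by rewrite /= ea /m subKn ?(ltnW hnp) //; congr pair; lia.
  exact: mem_sh.
have -> : (a, b) = gp p (m, 3%N) by rewrite /= ea /m subKn ?(ltnW hnp) //; congr pair; lia.
exact: mem_sh.
Qed.

Lemma sum_sub (s1 s2 : seq pt) (f : pt -> nat) : uniq s1 -> uniq s2 ->
  {subset s1 <= s2} -> (\sum_(x <- s1) f x <= \sum_(x <- s2) f x)%N.
Proof.
move=> u1 u2 sub.
have hp : perm_eq ([seq x <- s2 | x \in s1] ++ [seq x <- s2 | x \notin s1]) s2.
  by apply/permPl; exact: (perm_filterC (mem s1)).
rewrite -(perm_big _ hp) big_cat /=.
have hq : perm_eq [seq x <- s2 | x \in s1] s1.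
  apply: uniq_perm => //; first exact: filter_uniq.
  by move=> x; rewrite mem_filter; case h: (x \in s1) => //=; rewrite sub.
by rewrite (perm_big _ hq) leq_addr.
Qed.

Lemma mem_idx U ai : ai \in idx U -> ai.1 \in U /\ (ai.2 < 4)%N.
Proof. case/allpairsP => -[a i] [ha hi ->]; split => //; move: hi; rewrite mem_iota /=; lia. Qed.

Lemma Uof_bound p a : a \in Uof p -> [/\ (0 < a)%N, (2 * a < p)%N & (a <= p)%N].
Proof. rewrite mem_Uof => /and3P [h1 h2 _]; split; lia. Qed.

Lemma uniq_sh p : uniq (sh p (Uof p)).
Proof.
rewrite /sh map_inj_in_uniq.
  rewrite allpairs_uniq ?filter_uniq ?iota_uniq //.
  by move=> [a i] [b j] _ _ /= [-> ->].
move=> [a i] [b j] /mem_idx [/= /Uof_bound [h1 h2 _] h3] /mem_idx [/= /Uof_bound [h4 h5 _] h6].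
exact: gp_inj.
Qed.

Lemma sh_norm p x : x \in sh p (Uof p) -> (`|x.1| + `|x.2| = p)%N.
Proof.
case/mapP => -[a i] /mem_idx [/= /Uof_bound [_ _ h] _] ->; exact: norm_gp.
Qed.

Lemma sh_primb p : all primb (sh p (Uof p)).
Proof.
apply/allP => x /mapP [[a i] /mem_idx [/= ha _] ->].
move: (ha); rewrite mem_Uof => /and3P [h1 h2 h3].
have [_ h4 _] := Uof_bound _ _ ha.
apply: primb_gp => //; lia.
Qed.

Lemma bal_Uof p : bal p (sh p (Uof p)).
Proof.
apply: bal_sh; apply/allP => a /Uof_bound [] //.
Qed.

Lemma size_sh p U : size (sh p U) = (4 * size U)%N.
Proof. by rewrite size_map size_allpairs size_iota mulnC. Qed.

Lemma uniq_ball_sh p : (0 < p)%N -> uniq (ballP p.-1 ++ sh p (Uof p)).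
Proof.
move=> hp; rewrite cat_uniq uniq_ballP uniq_sh andbT /=.
apply/hasPn => x /sh_norm hn; rewrite mem_ballP hn; apply/nandP; right.
by case: (p) hp => [|n] //= _; rewrite -ltnNge.
Qed.

Lemma kappa_bound p : (4 <= p)%N -> ~~ odd p ->
  (kappap p <= kappap p.-1 + 2 * size (Uof p) * p)%N.
Proof.
move=> hp ev.
have sub : {subset ballP p <= ballP p.-1 ++ sh p (Uof p)}.
  move=> x; rewrite mem_ballP mem_cat mem_ballP => /andP [h1 h2].
  rewrite h1 /=; have [h3|h3] := leqP (`|x.1| + `|x.2|)%N p.-1; first by [].
  apply/orP; right; apply: shell_mem => //.
  by apply/eqP; rewrite eqn_leq h2 /=; move: h3; case: (p) => [|n] //=.
have hb := @bal_take p _ (2 * size (Uof p)) (bal_Uof p).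
have e : (2 * (2 * size (Uof p)) = size (sh p (Uof p)))%N by rewrite size_sh mulnA.
rewrite e take_size in hb.
case: hb => hb1 hb2.
have u : uniq (ballP p.-1 ++ sh p (Uof p)) by apply: uniq_ball_sh; lia.
rewrite /kappap /kappa geq_max; apply/andP; split.
  apply: leq_trans (@sum_sub _ _ (fun x : pt => `|x.1|%N) (uniq_ballP p) u sub) _.
  rewrite big_cat /= leq_add ?leq_maxl //.
apply: leq_trans (@sum_sub _ _ (fun x : pt => `|x.2|%N) (uniq_ballP p) u sub) _.
rewrite big_cat /= leq_add ?leq_maxr //.
Qed.
Lemma floor_lam (N r p : nat) : (0 < p)%N ->
  Num.floor ((N%:R + 2%:R * ((Posz r)%:~R) / p%:R)%R : rat) = Posz (N + (2 * r) %/ p).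
Proof.
move=> hp; apply: floor_def.
have hp' : (0 < p%:R :> rat)%R by rewrite ltr0n.
rewrite -!pmulrn !natrD -natrM.
apply/andP; split.
  rewrite lerD2l ler_pdivlMr // -natrM ler_nat; exact: leq_divM.
rewrite -addrA ltrD2l ltr_pdivrMr // -natrD -natrM ltr_nat addn1; exact: ltn_ceil.
Qed.

Lemma build p k L : (0 < p)%N -> (kappap p.-1 <= k)%N -> uniq L -> all primb L ->
  all (fun x : pt => `|x.1| + `|x.2| == p)%N L ->
  (\sum_(x <- L) `|x.1| <= k - kappap p.-1)%N ->
  (\sum_(x <- L) `|x.2| <= k - kappap p.-1)%N ->
  exists X : seq pt, [/\ uniq X, all primb X, (kappa X <= k)%N &
     size X = (Np p.-1 + size L)%N].
Proof.
move=> hp hK uL pL nL s1 s2; exists (ballP p.-1 ++ L); split.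
- rewrite cat_uniq uniq_ballP uL andbT /=; apply/hasPn => x /(allP nL) /eqP hn.
  rewrite mem_ballP hn; apply/nandP; right.
  by case: (p) hp => [|n] //= _; rewrite -ltnNge.
- rewrite all_cat pL andbT; apply/allP => x; rewrite mem_ballP => /andP [] //.
- rewrite /kappa !big_cat /= geq_max; apply/andP; split;
  rewrite -(subnKC hK) leq_add //; rewrite /kappap /kappa ?leq_maxl ?leq_maxr //.
- by rewrite size_cat.
Qed.

Lemma even_ok p k m : (4 <= p)%N -> ~~ odd p -> (kappap p.-1 <= k)%N ->
  (2 * m <= 4 * size (Uof p))%N -> (m * p <= k - kappap p.-1)%N ->
  exists X : seq pt, [/\ uniq X, all primb X, (kappa X <= k)%N &
     size X = (Np p.-1 + 2 * m)%N].
Proof.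
move=> hp ev hK hm hr.
have [h1 h2] := @bal_take p _ m (bal_Uof p).
have := @build p k (take (2 * m) (sh p (Uof p))).
rewrite size_takel ?size_sh //; apply; first by lia.
- by [].
- exact: take_uniq (uniq_sh p).
- by apply/allP => x /mem_take /(allP (sh_primb p)).
- by apply/allP => x /mem_take /sh_norm ->.
- exact: leq_trans h1 hr.
- exact: leq_trans h2 hr.
Qed.

Lemma a0_in p : (4 <= p)%N -> (4 %| p)%N -> (p %/ 2).-1 \in Uof p.
Proof.
move=> hp /dvdnP [q hq].
have e : (p %/ 2).-1 = (2 * q).-1 by rewrite hq; congr predn; lia.
rewrite mem_Uof e; apply/and3P; split; try lia.
have e2 : p = (2 * (2 * q).-1 + 2)%N by lia.
have e3 : gcdn (2 * q).-1 p = gcdn (2 * q).-1 2 by rewrite {1}e2 gcdnMDl.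
have o : odd (2 * q).-1.
  have -> : (2 * q).-1 = (2 * q.-1).+1 by lia.
  by rewrite oddS oddM.
by have := coprimen2 (2 * q).-1; rewrite /coprime e3 o.
Qed.

Lemma odd_ok p k m : (4 <= p)%N -> (4 %| p)%N -> (kappap p.-1 <= k)%N ->
  (2 * m + 2 <= 4 * size (Uof p))%N -> (m * p + p %/ 2 + 1 <= k - kappap p.-1)%N ->
  exists X : seq pt, [/\ uniq X, all primb X, (kappa X <= k)%N &
     size X = (Np p.-1 + (2 * m).+1)%N].
Proof.
move=> hp h4 hK hm hr.
have ev : ~~ odd p by move: h4 => /dvdnP [q ->]; rewrite oddM andbF.
set a0 := (p %/ 2).-1.
have a0U := @a0_in p hp h4.
set U := Uof p.
have uU : uniq U by rewrite filter_uniq ?iota_uniq.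
set U' := rem a0 U.
have sU' : size U' = (size U).-1 by rewrite size_rem.
have U'U : {subset U' <= U} by move=> x; rewrite mem_rem_uniq // => /andP [].
have a0U' : a0 \notin U' by rewrite mem_rem_uniqF.
set I' := [:: (a0, 0%N), (a0, 2%N), (a0, 1%N) & idx U'].
have I'ok : forall ai, ai \in I' -> ai.1 \in U /\ (ai.2 < 4)%N.
  move=> ai; rewrite !inE => /or4P [/eqP->|/eqP->|/eqP->|/mem_idx [h1 h2]] //.
  by split => //; apply: U'U.
have uI' : uniq I'.
  rewrite /I' /= !inE /=.
  have nI : forall i, (a0, i) \in idx U' = false by move=> i; apply/negP => /mem_idx [/= h _]; rewrite h in a0U'.
  rewrite !nI !xpair_eqE !eqxx /= allpairs_uniq ?rem_uniq ?iota_uniq //.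
  by move=> [a i] [b j] _ _ /= [-> ->].
have [_ hpa0 ha0p] := Uof_bound _ _ a0U.
set R := [:: gp p (a0, 2%N), gp p (a0, 1%N) & sh p U'].
have bR : bal p R.
  rewrite /R /= !abszN !absz_nat subnK // addnC subnK // eqxx /=.
  by apply: bal_sh; apply/allP => a /U'U /Uof_bound [].
have [h1 h2] := @bal_take p _ m bR.
have eL : gp p (a0, 0%N) :: take (2 * m) R = map (gp p) (take (2 * m).+1 I') by rewrite map_take.
have hinj : {in I' &, injective (gp p)}.
  move=> [a i] [b j] /I'ok [/= ha hi] /I'ok [/= hb hj].
  have [? ? _] := Uof_bound _ _ ha; have [? ? _] := Uof_bound _ _ hb.
  exact: gp_inj.
have inI : forall x, x \in gp p (a0, 0%N) :: take (2 * m) R ->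
    exists a i, [/\ x = gp p (a, i), a \in U & (i < 4)%N].
  move=> x; rewrite eL => /mapP [[a i] /mem_take /I'ok [/= ha hi] ->].
  by exists a, i.
have hu : uniq (gp p (a0, 0%N) :: take (2 * m) R).
  rewrite eL map_inj_in_uniq ?take_uniq //.
  by move=> x y /mem_take hx /mem_take hy; apply: hinj.
have hpr : all primb (gp p (a0, 0%N) :: take (2 * m) R).
  apply/allP => x /inI [a [i [-> ha hi]]].
  have := ha; rewrite mem_Uof => /and3P [? ? ?].
  have [_ ? _] := Uof_bound _ _ ha.
  apply: primb_gp => //; lia.
have hn : all (fun x : pt => `|x.1| + `|x.2| == p)%N (gp p (a0, 0%N) :: take (2 * m) R).
  apply/allP => x /inI [a [i [-> ha hi]]].
  have [_ _ ?] := Uof_bound _ _ ha.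
  by rewrite norm_gp.
have [q hq] := dvdnP h4.
have hp2 : (p %/ 2 = 2 * q)%N by rewrite hq (_ : (q * 4 = (2 * q) * 2)%N) ?mulnK // mulnAC mulnC.
have ea0 : a0 = (2 * q).-1 by rewrite /a0 hp2.
have q0 : (0 < q)%N by move: hp; rewrite hq; case: q {hq hp2 ea0}.
rewrite hp2 in hr.
have hs1 : (\sum_(x <- gp p (a0, 0%N) :: take (2 * m) R) `|x.1| <= k - kappap p.-1)%N.
  rewrite big_cons /=.
  apply: leq_trans (leq_add (leqnn _) h1) _; apply: leq_trans _ hr; rewrite ea0 hq; clear -q0; lia.
have hs2 : (\sum_(x <- gp p (a0, 0%N) :: take (2 * m) R) `|x.2| <= k - kappap p.-1)%N.
  rewrite big_cons /=.
  apply: leq_trans (leq_add (leqnn _) h2) _; apply: leq_trans _ hr; rewrite ea0 hq; clear -q0; lia.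
have hp0 : (0 < p)%N by apply: leq_trans hp.
have [X [u1 u2 u3 u4]] := @build p k _ hp0 hK hu hpr hn hs1 hs2.
exists X; split => //; rewrite u4 /= size_takel //.
rewrite /R /= size_sh sU'; move: hm; case: (size U) => [|n] /= hm; clear -hm; lia.
Qed.

Local Open Scope ring_scope.

Theorem lemma5p1 (k p : nat) :
  (0 < k)%N ->
  (0 < p)%N -> (k < kappap p)%N ->
  (forall q : nat, (0 < q)%N -> (q < p)%N -> (kappap q <= k)%N) ->
  (4 %| p)%N ->
  ((~ exists m : int, odd `|m|%N /\
        (k%:Z - (kappap p.-1)%:Z)%R = (m * (p %/ 2)%N%:Z)%R) ->
     exists X : seq pt, [/\ uniq X, all primb X, (kappa X <= k)%N &
        (size X)%:Z = Num.floor (lambda2 p k)])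
  /\
  ((exists m : int, odd `|m|%N /\
        (k%:Z - (kappap p.-1)%:Z)%R = (m * (p %/ 2)%N%:Z)%R) ->
     exists X : seq pt, [/\ uniq X, all primb X, (kappa X <= k)%N &
        (size X)%:Z = (Num.floor (lambda2 p k) - 1)%R]).
Proof.
move=> hk hp hkp hmin h4.
have hp4 : (4 <= p)%N by apply: dvdn_leq.
have ev : ~~ odd p by move: h4 => /dvdnP [q ->]; rewrite oddM andbF.
have [q hq] := dvdnP h4.
have hp2 : (p %/ 2 = 2 * q)%N by rewrite hq (_ : (q * 4 = (2 * q) * 2)%N) ?mulnK // mulnAC mulnC.
have q0 : (0 < q)%N by move: hp4; rewrite hq; case: q {hq hp2}.
have hK : (kappap p.-1 <= k)%N by apply: hmin; case: (p) hp4 => [|[|n]].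
set K0 := kappap p.-1 in hK *.
set r := (k - K0)%N.
set t := ((2 * r) %/ p)%N.
have er : (k%:Z - K0%:Z) = r%:Z by rewrite subzn.
have hfl : Num.floor (lambda2 p k) = (Np p.-1 + t)%N%:Z by rewrite /lambda2 -/K0 er floor_lam.
have hkb := @kappa_bound p hp4 ev.
set u := size (Uof p) in hkb *.
have ht : (t < 4 * u)%N.
  rewrite /t ltn_divLR //.
  rewrite -/K0 -mulnA in hkb.
  rewrite (_ : (4 * u * p = 2 * (2 * (u * p)))%N); last by rewrite !mulnA.
  move: hkb hkp hK; rewrite /r; clear; set z := (u * p)%N; lia.
have htp : (t * p <= 2 * r)%N by exact: leq_divM.
have htp2 : (2 * r < t.+1 * p)%N by exact: ltn_ceil.
rewrite hfl er; split.
- move=> nb.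
  have et := odd_double_half t.
  case/boolP: (odd t) => ot.
  + set m := t./2 in et.
    have ne : (t * p < 2 * r)%N.
      rewrite ltn_neqAle htp andbT; apply/negP => /eqP e.
      apply: nb; exists t%:Z; split => //.
      rewrite -PoszM hp2; congr Posz.
      move: e; rewrite hq; clear; nia.
    have s1 : (2 * m + 2 <= 4 * u)%N by rewrite -et ot in ht; lia.
    have s2 : (m * p + p %/ 2 + 1 <= k - K0)%N.
      rewrite -/r hp2; move: ne; rewrite -et ot hq.
      clear; rewrite mulnDl mul1n -muln2 -mulnA. set z := (m * _)%N. lia.
    have [X [h1 h2 h3 h4']] := @odd_ok p k m hp4 h4 hK s1 s2.
    exists X; split => //; rewrite h4' -et ot; congr Posz; lia.
  + set m := t./2 in et.
    have s1 : (2 * m <= 4 * u)%N by rewrite -et (negbTE ot) in ht; lia.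
    have s2 : (m * p <= k - K0)%N.
      rewrite -/r; move: htp; rewrite -et (negbTE ot) add0n -muln2 -mulnA (mulnC 2) mulnA.
      clear; set z := (m * p)%N; lia.
    have [X [h1 h2 h3 h4']] := @even_ok p k m hp4 ev hK s1 s2.
    exists X; split => //; rewrite h4' -et (negbTE ot); congr Posz; lia.
- move=> [M [oM eM]].
  rewrite hp2 in eM.
  have [n eMn] : exists n : nat, M = Posz n.
    case: M oM eM => [n|n] _; first by exists n.
    rewrite NegzE mulNr -PoszM => e.
    have : (n.+1 * (2 * q) = 0)%N by clear -e; lia.
    by move/eqP; rewrite muln_eq0 muln_eq0 (negbTE (lt0n_neq0 q0)).
  subst M; move: eM; rewrite -PoszM => -[er'].
  have etn : t = n by rewrite /t er' hq (_ : (2 * (n * (2 * q)) = n * (q * 4))%N) ?mulnK ?muln_gt0 //; lia.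
  have et := odd_double_half t.
  rewrite /= -etn in oM.
  set m := t./2 in et.
  have s1 : (2 * m <= 4 * u)%N by rewrite -et oM in ht; lia.
  have s2 : (m * p <= k - K0)%N.
    rewrite -/r; move: htp; rewrite -et oM; clear; nia.
  have [X [h1 h2 h3 h4']] := @even_ok p k m hp4 ev hK s1 s2.
  exists X; split => //; rewrite h4' -et oM.
  rewrite (_ : (Np p.-1 + (1 + m.*2) = (Np p.-1 + 2 * m) + 1)%N); [rewrite PoszD; lia | lia].
Qed.
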